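(* Let $\mathbf{A}\in\mathbb{C}^{M\times N_a}$ and $\mathbf{B}\in\mathbb{C}^{M\times N_b}$ have unit-$\ell_2$-norm columns, with coherence parameters $\mu_a,\mu_b,\mu_m$. Let $\mathbf{z}=\mathbf{A}\mathbf{x}+\mathbf{B}\mathbf{e}+\mathbf{n}$ with $\mathbf{x}\in\mathbb{C}^{N_a}$, $\mathbf{e}\in\mathbb{C}^{N_b}$ with support $\mathcal{E}=\mathrm{supp}(\mathbf{e})$, $|\mathcal{E}|=n_e$, known, and $\|\mathbf{n}\|_2\le\varepsilon$. Let $n_x\ge1$ and $\mathcal{X}=\mathrm{supp}_{n_x}(\mathbf{x})$. If $$2n_xn_e\mu_m^2< f(2n_x,n_e)=[1-\mu_a(2n_x-1)]^+\,[1-\mu_b(n_e-1)]^+,$$ then, with $\mathbf{R}_{\mathcal{E}}=\mathbf{I}_M-\mathbf{B}_{\mathcal{E}}\mathbf{B}_{\mathcal{E}}^\dagger$ and any $\eta\ge\varepsilon$, every solution $\hat{\mathbf{x}}$ of $$\text{minimize }\|\tilde{\mathbf{x}}\|_1\ \text{ subject to }\ \|\mathbf{R}_{\mathcal{E}}(\mathbf{z}-\mathbf{A}\tilde{\mathbf{x}})\|_2\le\eta$$ satisfies $$\|\mathbf{x}-\hat{\mathbf{x}}\|_2\le C_5(\varepsilon+\eta)+C_6\|\mathbf{x}-\mathbf{x}_{\mathcal{X}}\|_1,$$ where $C_5,C_6\ge0$ depend only on $\mu_a,\mu_b,\mu_m,n_x,n_e$.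
   Context: Coherence parameters: $\mu_a=\max_{k\ne\ell}|\mathbf{a}_k^H\mathbf{a}_\ell|$, $\mu_b=\max_{k\ne\ell}|\mathbf{b}_k^H\mathbf{b}_\ell|$, $\mu_m=\max_{k,\ell}|\mathbf{a}_k^H\mathbf{b}_\ell|$, where $\mathbf{a}_k,\mathbf{b}_\ell$ are the columns of $\mathbf{A},\mathbf{B}$. $[x]^+=\max\{x,0\}$. $\mathbf{B}_{\mathcal{E}}$ is the submatrix of columns of $\mathbf{B}$ indexed by $\mathcal{E}$, $\mathbf{M}^\dagger=(\mathbf{M}^H\mathbf{M})^{-1}\mathbf{M}^H$. $\mathbf{x}_{\mathcal{S}}$ is $\mathbf{x}$ with entries outside $\mathcal{S}$ set to zero. $\mathrm{supp}_n(\mathbf{x})$ denotes an index set of size $n$ minimizing $\|\mathbf{x}-\mathbf{x}_{\tilde{\mathcal{X}}}\|_1$ over all index sets $\tilde{\mathcal X}$ of size $n$. *)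

(* Defs.v *)
From HB Require Import structures.
From mathcomp Require Import all_boot all_order all_algebra.
Set Implicit Arguments. Unset Strict Implicit. Unset Printing Implicit Defensive.
Import Order.TTheory GRing.Theory Num.Theory.
Local Open Scope ring_scope.

Section Defs.
Variable C : numClosedFieldType.

Definition adjmx m n (A : 'M[C]_(m, n)) : 'M[C]_(n, m) := (map_mx Num.conj A)^T.

Definition norm1 n (v : 'cV[C]_n) : C := \sum_i `|v i 0|.
Definition norm2 n (v : 'cV[C]_n) : C := sqrtC (\sum_i `|v i 0| ^+ 2).

Definition pospart (x : C) : C := Num.max x 0.

Definition colip m na nb (A : 'M[C]_(m, na)) (B : 'M[C]_(m, nb))
  (k : 'I_na) (l : 'I_nb) : C := (adjmx (col k A) *m col l B) 0 0.

Definition mu_self m n (A : 'M[C]_(m, n)) : C :=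
  \big[Num.max/0]_(k < n) \big[Num.max/0]_(l < n | l != k) `|colip A A k l|.
Definition mu_mutual m na nb (A : 'M[C]_(m, na)) (B : 'M[C]_(m, nb)) : C :=
  \big[Num.max/0]_(k < na) \big[Num.max/0]_(l < nb) `|colip A B k l|.

Definition restrict n (x : 'cV[C]_n) (S : {set 'I_n}) : 'cV[C]_n :=
  \col_i (if i \in S then x i 0 else 0).

Definition is_supp_n n (k : nat) (x : 'cV[C]_n) (X : {set 'I_n}) : Prop :=
  #|X| = k /\
  forall Y : {set 'I_n}, #|Y| = k -> norm1 (x - restrict x X) <= norm1 (x - restrict x Y).

(* B_E : submatrix of columns of B indexed by E (in increasing order) *)
Definition subcols m n (B : 'M[C]_(m, n)) (E : {set 'I_n}) : 'M[C]_(m, #|E|) :=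
  colsub (@enum_val _ (mem E)) B.

Definition pinv m n (M : 'M[C]_(m, n)) : 'M[C]_(n, m) :=
  invmx (adjmx M *m M) *m adjmx M.

Definition projE m n (B : 'M[C]_(m, n)) (E : {set 'I_n}) : 'M[C]_m :=
  1%:M - subcols B E *m pinv (subcols B E).

End Defs.

(* Main.v *)
Require Import Defs.
From HB Require Import structures.
From mathcomp Require Import all_boot all_order all_algebra.
From mathcomp Require Import ring.
Set Implicit Arguments. Unset Strict Implicit. Unset Printing Implicit Defensive.
Import Order.TTheory GRing.Theory Num.Theory.
Local Open Scope ring_scope.

Section Aux.
Variable C : numClosedFieldType.
Implicit Types (m n p : nat).

Lemma adjmxM m n p (A : 'M[C]_(m,n)) (B : 'M[C]_(n,p)) : adjmx (A *m B) = adjmx B *m adjmx A.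
Proof. by rewrite /adjmx map_mxM trmx_mul. Qed.
Lemma adjmxK m n (A : 'M[C]_(m,n)) : adjmx (adjmx A) = A.
Proof. apply/matrixP=> i j; by rewrite /adjmx !mxE conjCK. Qed.
Lemma adjmx_inv n (A : 'M[C]_n) : adjmx (invmx A) = invmx (adjmx A).
Proof. by rewrite /adjmx map_invmx trmx_inv. Qed.

Definition dot m (u v : 'cV[C]_m) : C := \sum_i (u i 0)^* * v i 0.
Definition sq m (u : 'cV[C]_m) : C := \sum_i `|u i 0| ^+ 2.

Lemma dotE m (u v : 'cV[C]_m) : (adjmx u *m v) 0 0 = dot u v.
Proof. rewrite !mxE; apply: eq_bigr => i _; by rewrite !mxE. Qed.

Lemma dotuu m (u : 'cV[C]_m) : dot u u = sq u.
Proof. apply: eq_bigr => i _; by rewrite normCKC. Qed.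

Lemma sq_ge0 m (u : 'cV[C]_m) : 0 <= sq u.
Proof. apply: sumr_ge0 => i _; exact: exprn_ge0. Qed.

Lemma norm2E m (u : 'cV[C]_m) : norm2 u = sqrtC (sq u).
Proof. by []. Qed.

Lemma norm2_ge0 m (u : 'cV[C]_m) : 0 <= norm2 u.
Proof. by rewrite norm2E sqrtC_ge0 sq_ge0. Qed.

Lemma norm2_sq m (u : 'cV[C]_m) : norm2 u ^+ 2 = sq u.
Proof. by rewrite norm2E sqrtCK. Qed.

Lemma dot_adj m n (A : 'M[C]_(m,n)) u v : dot (A *m u) v = dot u (adjmx A *m v).
Proof. by rewrite -!dotE adjmxM mulmxA. Qed.

Lemma dotC m (u v : 'cV[C]_m) : dot v u = (dot u v)^*.
Proof. rewrite /dot rmorph_sum; apply: eq_bigr => i _. by rewrite rmorphM /= conjCK mulrC. Qed.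

Lemma dotBr m (u v w : 'cV[C]_m) : dot u (v - w) = dot u v - dot u w.
Proof. rewrite /dot -sumrB; apply: eq_bigr => i _; by rewrite !mxE mulrBr. Qed.
Lemma dotDr m (u v w : 'cV[C]_m) : dot u (v + w) = dot u v + dot u w.
Proof. rewrite /dot -big_split; apply: eq_bigr => i _; by rewrite !mxE mulrDr. Qed.
Lemma dotBl m (u v w : 'cV[C]_m) : dot (v - w) u = dot v u - dot w u.
Proof. rewrite /dot -sumrB; apply: eq_bigr => i _; by rewrite !mxE rmorphB mulrBl. Qed.

Lemma dot_mulr m n (u : 'cV[C]_m) (N : 'M[C]_(m,n)) (h : 'cV[C]_n) :
  dot u (N *m h) = \sum_j dot u (col j N) * h j 0.
Proof.
rewrite /dot; under eq_bigr do rewrite mxE mulr_sumr.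
rewrite exchange_big /=; apply: eq_bigr => j _; rewrite mulr_suml.
by apply: eq_bigr => i _; rewrite !mxE mulrA.
Qed.

Lemma dot_mull m n (v : 'cV[C]_m) (N : 'M[C]_(m,n)) (w : 'cV[C]_n) :
  dot (N *m w) v = \sum_j (w j 0)^* * dot (col j N) v.
Proof.
rewrite dotC dot_mulr rmorph_sum; apply: eq_bigr => j _.
by rewrite rmorphM /= -dotC mulrC.
Qed.

Lemma rCS (I : finType) (x y : I -> C) :
  (forall i, 0 <= x i) -> (forall i, 0 <= y i) ->
  (\sum_i x i * y i) ^+ 2 <= (\sum_i x i ^+ 2) * (\sum_i y i ^+ 2).
Proof.
move=> x0 y0.
have H : 0 <= \sum_i \sum_j (x i * y j - x j * y i) ^+ 2.
  apply: sumr_ge0 => i _; apply: sumr_ge0 => j _; rewrite -realEsqr.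
  by rewrite rpredB // rpredM // ger0_real.
have E : \sum_i \sum_j (x i * y j - x j * y i) ^+ 2 =
   2 * ((\sum_i x i ^+ 2) * (\sum_i y i ^+ 2) - (\sum_i x i * y i) ^+ 2).
  have E1 : \sum_i \sum_j (x i * y j - x j * y i) ^+ 2 =
     \sum_i \sum_j (x i ^+ 2 * y j ^+ 2 - x i * y i * (x j * y j))
   + \sum_i \sum_j (x j ^+ 2 * y i ^+ 2 - x i * y i * (x j * y j)).
    rewrite -big_split /=; apply: eq_bigr => i _; rewrite -big_split /=.
    apply: eq_bigr => j _; ring.
  have E2 : \sum_i \sum_j (x j ^+ 2 * y i ^+ 2 - x i * y i * (x j * y j)) =
            \sum_i \sum_j (x i ^+ 2 * y j ^+ 2 - x i * y i * (x j * y j)).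
    rewrite exchange_big /=; apply: eq_bigr => i _; apply: eq_bigr => j _; ring.
  rewrite E1 E2 mulr2n mulrDl mul1r; congr (_ + _);
  rewrite expr2 !mulr_suml; rewrite -sumrB; apply: eq_bigr => i _;
  rewrite !mulr_sumr -sumrB; apply: eq_bigr => j _; ring.
move: H; rewrite E pmulr_rge0 ?ltr0n // subr_ge0 //.
Qed.

Lemma sum_norm_sq m (u : 'cV[C]_m) : sq u <= (\sum_i `|u i 0|) ^+ 2.
Proof.
rewrite expr2 mulr_suml; apply: ler_sum => i _.
rewrite expr2; apply: ler_wpM2l => //.
rewrite (bigD1 i) //= lerDl; apply: sumr_ge0 => j _ //.
Qed.

Lemma CS m (u v : 'cV[C]_m) : `|dot u v| ^+ 2 <= sq u * sq v.
Proof.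
have H := @rCS _ (fun i => `|u i 0| : C) (fun i => `|v i 0| : C) (fun i => normr_ge0 _) (fun i => normr_ge0 _).
apply: le_trans H; rewrite ler_pXn2r ?nnegrE ?sumr_ge0 //; last by move=> i _; rewrite mulr_ge0.
apply: le_trans (ler_norm_sum _ _ _) _; apply: ler_sum => i _.
by rewrite normrM norm_conjC.
Qed.

Lemma CS2 m (u v : 'cV[C]_m) : `|dot u v| <= norm2 u * norm2 v.
Proof.
rewrite -(ler_pXn2r (n:=2)) ?nnegrE ?mulr_ge0 ?norm2_ge0 //.
by rewrite exprMn !norm2_sq CS.
Qed.

Lemma sqrtC_le (a b : C) : 0 <= a -> a <= b -> sqrtC a <= sqrtC b.
Proof. move=> a0 ab; rewrite ler_sqrtC // nnegrE //; exact: le_trans ab. Qed.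


Lemma max_nn (x y : C) : 0 <= x -> 0 <= y ->
  [/\ x <= Num.max x y, y <= Num.max x y & 0 <= Num.max x y].
Proof.
move=> x0 y0; rewrite /Order.max; case: ifP => [/ltW xy|/negbT nxy].
  by split.
have yx : y <= x by rewrite real_leNgt ?ger0_real.
by split.
Qed.

Lemma bigmax_gen (I : eqType) (r : seq I) (P : pred I) (F : I -> C) :
  (forall i, 0 <= F i) ->
  0 <= \big[Num.max/0]_(i <- r | P i) F i /\
  forall j, j \in r -> P j -> F j <= \big[Num.max/0]_(i <- r | P i) F i.
Proof.
move=> F0; elim: r => [|a r [IH0 IH]]; first by rewrite big_nil; split.
rewrite big_cons; case Pa: (P a).
  have [h1 h2 h3] := max_nn (F0 a) IH0.
  split => // j; rewrite inE => /orP[/eqP->|jr] Pj //.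
  exact: le_trans (IH j jr Pj) h2.
split => // j; rewrite inE => /orP[/eqP->|jr] Pj; first by rewrite Pa in Pj.
exact: IH.
Qed.

Lemma bigmax_ge0 (I : finType) (P : pred I) (F : I -> C) :
  (forall i, 0 <= F i) -> 0 <= \big[Num.max/0]_(i | P i) F i.
Proof. by move=> F0; have [] := bigmax_gen (index_enum I) P F0. Qed.

Lemma bigmax_ge (I : finType) (P : pred I) (F : I -> C) j :
  (forall i, 0 <= F i) -> P j -> F j <= \big[Num.max/0]_(i | P i) F i.
Proof.
move=> F0 Pj; have [_ H] := bigmax_gen (index_enum I) P F0.
by apply: H; rewrite ?mem_index_enum.
Qed.

Lemma mu_self_ge0 m n (A : 'M[C]_(m,n)) : 0 <= mu_self A.
Proof. apply: bigmax_ge0 => k; exact: bigmax_ge0. Qed.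
Lemma mu_mutual_ge0 m na nb (A : 'M[C]_(m,na)) (B : 'M[C]_(m,nb)) : 0 <= mu_mutual A B.
Proof. apply: bigmax_ge0 => k; exact: bigmax_ge0. Qed.

Lemma colipE m na nb (A : 'M[C]_(m,na)) (B : 'M[C]_(m,nb)) k l :
  colip A B k l = dot (col k A) (col l B).
Proof. by rewrite /colip dotE. Qed.

Lemma mu_self_ge m n (A : 'M[C]_(m,n)) k l : l != k ->
  `|dot (col k A) (col l A)| <= mu_self A.
Proof.
move=> lk; rewrite -colipE.
apply: le_trans (_ : _ <= \big[Num.max/0]_(l < n | l != k) `|colip A A k l|) _.
  exact: (bigmax_ge (P := fun l => l != k) (F := fun l => `|colip A A k l| : C)).
apply: (bigmax_ge (P := fun _ => true)
  (F := fun k => \big[Num.max/0]_(l < n | l != k) `|colip A A k l| : C)) => //.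
by move=> i; apply: bigmax_ge0.
Qed.

Lemma mu_mutual_ge m na nb (A : 'M[C]_(m,na)) (B : 'M[C]_(m,nb)) k l :
  `|dot (col k A) (col l B)| <= mu_mutual A B.
Proof.
rewrite -colipE.
apply: le_trans (_ : _ <= \big[Num.max/0]_(l < nb) `|colip A B k l|) _.
  exact: (bigmax_ge (P := fun _ => true) (F := fun l => `|colip A B k l| : C)).
apply: (bigmax_ge (P := fun _ => true)
  (F := fun k => \big[Num.max/0]_(l < nb) `|colip A B k l| : C)) => //.
by move=> i; apply: bigmax_ge0.
Qed.

Lemma adjmx0 m n : adjmx (0 : 'M[C]_(m,n)) = 0.
Proof. by apply/matrixP=> i j; rewrite /adjmx !mxE conjC0. Qed.

Section Proj.
Variables (M Nb : nat) (B : 'M[C]_(M, Nb)) (E : {set 'I_Nb}).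
Local Notation S := (subcols B E).
Local Notation G := (adjmx S *m S).
Local Notation Q := (S *m pinv S).
Local Notation P := (projE B E).
Hypothesis Gu : G \in unitmx.

Lemma adjG : adjmx G = G.
Proof. by rewrite adjmxM adjmxK. Qed.

Lemma adjQ : adjmx Q = Q.
Proof. by rewrite /pinv !adjmxM adjmxK adjmx_inv adjG mulmxA. Qed.

Lemma QS : Q *m S = S.
Proof. by rewrite /pinv -!mulmxA mulVmx // mulmx1. Qed.

Lemma QQ : Q *m Q = Q.
Proof. by rewrite /pinv -!mulmxA (mulmxA (adjmx S) S) (mulmxA (invmx _)) mulVmx // mul1mx. Qed.

Lemma PS : P *m S = 0.
Proof. by rewrite /projE mulmxBl mul1mx QS subrr. Qed.

Lemma PE (u : 'cV[C]_M) : P *m u = u - Q *m u.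
Proof. by rewrite /projE mulmxBl mul1mx mulmxA. Qed.

Lemma dotQ (u v : 'cV[C]_M) : dot (Q *m u) v = dot u (Q *m v).
Proof. by rewrite dot_adj adjQ. Qed.

Lemma dotQQ (u v : 'cV[C]_M) : dot (Q *m u) (Q *m v) = dot u (Q *m v).
Proof. by rewrite dot_adj adjQ mulmxA QQ. Qed.

Lemma dotP (u v : 'cV[C]_M) : dot (P *m u) (P *m v) = dot u v - dot (Q *m u) (Q *m v).
Proof.
rewrite !PE dotBl !dotBr (dotQQ u v) (dotQ u v); ring.
Qed.

Lemma sqP (u : 'cV[C]_M) : sq (P *m u) = sq u - sq (Q *m u).
Proof. by rewrite -!dotuu dotP. Qed.

Lemma sqP_le (u : 'cV[C]_M) : sq (P *m u) <= sq u.
Proof. by rewrite sqP lerBlDr lerDl sq_ge0. Qed.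

Lemma norm2P_le (u : 'cV[C]_M) : norm2 (P *m u) <= norm2 u.
Proof. by rewrite !norm2E sqrtC_le ?sq_ge0 ?sqP_le. Qed.

End Proj.

Section Gersh.
Variables (M Nb : nat) (B : 'M[C]_(M, Nb)) (E : {set 'I_Nb}).
Local Notation S := (subcols B E).
Local Notation G := (adjmx S *m S).
Hypothesis hB : forall l, norm2 (col l B) = 1.

Lemma sq_colB l : sq (col l B) = 1.
Proof. by rewrite -norm2_sq hB expr1n. Qed.

Lemma colS k : col k S = col (enum_val k) B.
Proof. exact: col_colsub. Qed.

Lemma sum_abs_sq (I : finType) (w : I -> C) :
  (\sum_i `|w i|) ^+ 2 = \sum_i `|w i| ^+ 2 + \sum_k \sum_(l | l != k) `|w k| * `|w l|.
Proof.
rewrite expr2 mulr_suml -big_split /=; apply: eq_bigr => k _.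
by rewrite mulr_sumr (bigD1 k) //= expr2.
Qed.

Lemma gersh (w : 'cV[C]_#|E|) :
  (1 - mu_self B * (#|E|%:R - 1)) * sq w <= sq (S *m w).
Proof.
set mb := mu_self B.
pose R := \sum_k \sum_(l | l != k) (w k 0)^* * (dot (col k S) (col l S) * w l 0).
have eq1 : sq (S *m w) = sq w + R.
  rewrite -dotuu dot_mull /sq /R -big_split /=; apply: eq_bigr => k _.
  rewrite dot_mulr mulr_sumr (bigD1 k) //=; congr (_ + _).
  by rewrite dotuu colS sq_colB mul1r normCKC.
have Rb : `|R| <= mb * (\sum_k \sum_(l | l != k) `|w k 0| * `|w l 0|).
  apply: le_trans (ler_norm_sum _ _ _) _; rewrite mulr_sumr; apply: ler_sum => k _.
  apply: le_trans (ler_norm_sum _ _ _) _; rewrite mulr_sumr; apply: ler_sum => l lk.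
  rewrite !normrM norm_conjC.
  rewrite mulrCA; apply: ler_wpM2r; first by rewrite mulr_ge0.
  rewrite !colS; apply: mu_self_ge.
  by apply: contra lk => /eqP /enum_val_inj ->.
have cs : (\sum_k `|w k 0|) ^+ 2 <= sq w * #|E|%:R.
  have H := @rCS _ (fun k => `|w k 0| : C) (fun _ => 1) (fun i => normr_ge0 _) (fun i => ler01).
  have e1 : \sum_k `|w k 0| * 1 = \sum_k `|w k 0| by apply: eq_bigr => k _; rewrite mulr1.
  have e2 : \sum_(k < #|E|) (1 : C) ^+ 2 = #|E|%:R.
    by rewrite (eq_bigr (fun _ => 1)) ?sumr_const ?card_ord // => k _; rewrite expr1n.
  by move: H; rewrite /= e1 e2.
have eq2 := sum_abs_sq (fun k => w k 0).
have mb0 : 0 <= mb by apply: mu_self_ge0.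
have Rr : - `|R| <= R.
  have Rreal : R \is Num.real.
    have -> : R = sq (S *m w) - sq w by rewrite eq1 addrC addKr.
    by rewrite rpredB // ger0_real // sq_ge0.
  by rewrite lerNl -normrN real_ler_norm ?rpredN.
rewrite eq1; apply: le_trans (_ : sq w - `|R| <= _); last by rewrite lerD2l.
apply: le_trans (_ : sq w - mb * (\sum_k \sum_(l | l != k) `|w k 0| * `|w l 0|) <= _); last first.
  by rewrite lerD2l lerN2.
rewrite mulrBl mul1r lerD2l lerN2 -mulrA; apply: ler_wpM2l => //.
move: cs; rewrite eq2 /sq -lerBrDl => H; apply: le_trans H _.
by rewrite mulrBl mul1r mulrC.
Qed.

Lemma G_unit : 0 < 1 - mu_self B * (#|E|%:R - 1) -> G \in unitmx.
Proof.
move=> b0; rewrite -row_free_unit; apply: inj_row_free => v vG.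
set w := adjmx v.
have Gw : G *m w = 0 by rewrite /w -adjG -adjmxM vG adjmx0.
have sw : sq (S *m w) = 0.
  rewrite -dotuu dot_adj mulmxA Gw /dot big1 // => i _. by rewrite [in X in _ * X]mxE mulr0.
have := gersh w; rewrite sw pmulr_rle0 // => sw0.
have sw' : sq w = 0 by apply/eqP; rewrite eq_le sw0 sq_ge0.
have w0 : w = 0.
  apply/matrixP => i j; rewrite (ord1 j).
  have := psumr_eq0P (fun i _ => exprn_ge0 2 (normr_ge0 (w i 0))) sw' (i := i) isT.
  by move/eqP; rewrite expf_eq0 /= normr_eq0 => /eqP ->; rewrite mxE.
by rewrite -(adjmxK v) -/w w0 adjmx0.
Qed.

Lemma Q_bound (a : 'cV[C]_M) (mm : C) :
  0 < 1 - mu_self B * (#|E|%:R - 1) ->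
  (forall k, `|dot (col k B) a| <= mm) -> 0 <= mm ->
  sq (S *m pinv S *m a) <= #|E|%:R * mm ^+ 2 / (1 - mu_self B * (#|E|%:R - 1)).
Proof.
set beta := 1 - _ => b0 hmm mm0.
have Gu := G_unit b0.
set w := invmx G *m (adjmx S *m a).
have Qa : S *m pinv S *m a = S *m w by rewrite /pinv /w !mulmxA.
set q := sq (S *m pinv S *m a).
have q0 : 0 <= q by apply: sq_ge0.
have qd : q = dot (adjmx S *m a) w.
  by rewrite /q -dotuu (dotQQ Gu) Qa dot_adj adjmxK.
have c1 : q ^+ 2 <= sq (adjmx S *m a) * sq w.
  by rewrite -{1}(ger0_norm q0) qd CS.
have c2 : sq (adjmx S *m a) <= #|E|%:R * mm ^+ 2.
  rewrite /sq; apply: le_trans (_ : \sum_(k < #|E|) mm ^+ 2 <= _).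
    apply: ler_sum => k _; rewrite ler_pXn2r ?nnegrE //.
    rewrite (_ : (adjmx S *m a) k 0 = dot (col k S) a).
      by rewrite colS.
    by rewrite -dotE; rewrite !mxE; apply: eq_bigr => i _; rewrite !mxE.
  by rewrite sumr_const card_ord mulr_natl.
have c3 : beta * sq w <= q by rewrite /q Qa gersh.
rewrite ler_pdivlMr //.
have [->|qn0] := eqVneq q 0; first by rewrite mul0r mulr_ge0 ?exprn_ge0.
have qp : 0 < q by rewrite lt_def qn0 q0.
rewrite -(ler_pM2r qp).
have -> : q * beta * q = beta * q ^+ 2 by rewrite expr2; ring.
apply: le_trans (_ : beta * (#|E|%:R * mm ^+ 2 * sq w) <= _).
  apply: ler_wpM2l; first exact: ltW.
  apply: le_trans c1 _; exact: (ler_wpM2r (sq_ge0 w) c2).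
rewrite mulrCA; apply: ler_wpM2l c3; by rewrite mulr_ge0 ?exprn_ge0.
Qed.

End Gersh.

Lemma col_mulmx m n p (P : 'M[C]_(m,n)) (A : 'M[C]_(n,p)) j : col j (P *m A) = P *m col j A.
Proof. by apply/matrixP=> i k; rewrite !mxE; apply: eq_bigr => l _; rewrite !mxE. Qed.

Lemma pospart_prod (a b c : C) : a \is Num.real -> b \is Num.real -> 0 <= c ->
  c < pospart a * pospart b -> [/\ 0 < a, 0 < b & c < a * b].
Proof.
move=> ar br c0; rewrite /pospart /Order.max.
case: ifP => [_|/negbT na]; first by rewrite mul0r => /(le_lt_trans c0); rewrite ltxx.
case: ifP => [_|/negbT nb]; first by rewrite mulr0 => /(le_lt_trans c0); rewrite ltxx.
have a0 : 0 <= a by rewrite real_leNgt ?real0.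
have b0 : 0 <= b by rewrite real_leNgt ?real0.
move=> H; split => //.
- rewrite lt_def a0 andbT; apply/eqP => a0'; move: H; rewrite a0' mul0r.
  by move/(le_lt_trans c0); rewrite ltxx.
- rewrite lt_def b0 andbT; apply/eqP => b0'; move: H; rewrite b0' mulr0.
  by move/(le_lt_trans c0); rewrite ltxx.
Qed.

End Aux.

Definition rho (C : numClosedFieldType) (mub mum : C) (ne : nat) : C :=
  ne%:R * mum ^+ 2 / (1 - mub * (ne%:R - 1)).
Definition Kc (C : numClosedFieldType) (mua mub mum : C) (nx ne : nat) : C :=
  nx%:R * (mua + rho mub mum ne).
Definition Dc (C : numClosedFieldType) (mua mub mum : C) (nx ne : nat) : C :=
  1 + mua - 2 * Kc mua mub mum nx ne.
Definition C5f (C : numClosedFieldType) (mua mub mum : C) (nx ne : nat) : C :=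
  if 0 < Dc mua mub mum nx ne then 2 * nx%:R / Dc mua mub mum nx ne else 0.
Definition C6f (C : numClosedFieldType) (mua mub mum : C) (nx ne : nat) : C :=
  if (0 < Dc mua mub mum nx ne) && (0 <= Kc mua mub mum nx ne)
  then 4 * Kc mua mub mum nx ne / Dc mua mub mum nx ne + 2 else 0.

Lemma C56_ge0 (C : numClosedFieldType) (mua mub mum : C) nx ne :
  0 <= C5f mua mub mum nx ne /\ 0 <= C6f mua mub mum nx ne.
Proof.
rewrite /C5f /C6f; split; case: ifP => // H.
  by rewrite divr_ge0 ?mulr_ge0 //; exact: ltW.
move/andP: H => [D0 K0]; apply: addr_ge0 => //; apply: divr_ge0; [exact: mulr_ge0 | exact: ltW].
Qed.

Section Main.
Variable C : numClosedFieldType.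

Lemma main (M Na Nb : nat) (A : 'M[C]_(M, Na)) (B : 'M[C]_(M, Nb))
           (x : 'cV[C]_Na) (e : 'cV[C]_Nb) (n z : 'cV[C]_M)
           (E : {set 'I_Nb}) (nx : nat) (X : {set 'I_Na}) (eps eta : C) (xhat : 'cV[C]_Na) :
      (forall k, norm2 (col k A) = 1) ->
      (forall l, norm2 (col l B) = 1) ->
      z = A *m x + B *m e + n ->
      (forall i, (e i 0 != 0) = (i \in E)) ->
      norm2 n <= eps ->
      (1 <= nx)%N ->
      is_supp_n nx x X ->
      (2 * nx * #|E|)%:R * mu_mutual A B ^+ 2 <
        pospart (1 - mu_self A * ((2 * nx)%:R - 1))
        * pospart (1 - mu_self B * (#|E|%:R - 1)) ->
      eps <= eta ->
      norm2 (projE B E *m (z - A *m xhat)) <= eta ->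
      (forall xt : 'cV[C]_Na, norm2 (projE B E *m (z - A *m xt)) <= eta ->
         norm1 xhat <= norm1 xt) ->
      norm2 (x - xhat) <=
        C5f (mu_self A) (mu_self B) (mu_mutual A B) nx #|E| * (eps + eta)
        + C6f (mu_self A) (mu_self B) (mu_mutual A B) nx #|E| * norm1 (x - restrict x X).
Proof.
move=> hA hB hz he hn hnx [cX _] hcond heps hxhat hmin.
set ma := mu_self A; set mb := mu_self B; set mm := mu_mutual A B.
set ne := #|E|.
have ma0 : 0 <= ma by apply: mu_self_ge0.
have mb0 : 0 <= mb by apply: mu_self_ge0.
have mm0 : 0 <= mm by apply: mu_mutual_ge0.
set beta := 1 - mb * (ne%:R - 1).
set a' := 1 - ma * ((2 * nx)%:R - 1).
have [a0 b0 hc] : [/\ 0 < a', 0 < beta & (2 * nx * ne)%:R * mm ^+ 2 < a' * beta].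
  apply: pospart_prod => //.
  - by rewrite rpredB ?rpredM ?rpredB ?ger0_real.
  - by rewrite rpredB ?rpredM ?rpredB ?ger0_real.
  - by rewrite mulr_ge0 ?exprn_ge0.
set r := rho mb mm ne.
have r0 : 0 <= r by rewrite /r /rho divr_ge0 ?mulr_ge0 ?exprn_ge0 // ltW.
set K := Kc ma mb mm nx ne.
set D := Dc ma mb mm nx ne.
have K0 : 0 <= K by rewrite /K /Kc mulr_ge0 // addr_ge0.
have D0 : 0 < D.
  have -> : D = a' - 2 * nx%:R * r.
    by rewrite /D /Dc /K /Kc /a' natrM -/r; ring.
  rewrite subr_gt0 /r /rho mulrA ltr_pdivrMr // mulrA -natrM -natrM.
  by move: hc; rewrite -/beta.
have C5E : C5f ma mb mm nx ne = 2 * nx%:R / D by rewrite /C5f -/D D0.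
have C6E : C6f ma mb mm nx ne = 4 * K / D + 2 by rewrite /C6f -/D -/K D0 K0.
rewrite C5E C6E.
have Gu := G_unit hB b0.
set S := subcols B E.
set P := projE B E.
set Q := S *m pinv S.
have PBe : P *m (B *m e) = 0.
  pose e' : 'cV[C]_ne := \col_k e (enum_val k) 0.
  have -> : B *m e = S *m e'.
    apply/matrixP => i j; rewrite (ord1 j) !mxE.
    rewrite (bigID (fun l => l \in E)) /= [X in _ + X]big1 ?addr0; last first.
      move=> l lE; have : ~~ (e l 0 != 0) by rewrite he.
      by rewrite negbK => /eqP ->; rewrite mulr0.
    rewrite big_enum_val; apply: eq_bigr => k _; by rewrite !mxE.
  by rewrite mulmxA PS // mul0mx.
set u := P *m (z - A *m x).
have uE : u = P *m n.
  rewrite /u hz; have -> : A *m x + B *m e + n - A *m x = B *m e + n.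
    by rewrite [LHS]addrC !addrA addNr add0r.
  by rewrite mulmxDr PBe add0r.
have hu : norm2 u <= eps by rewrite uE; apply: le_trans (norm2P_le Gu n) hn.
set v := P *m (z - A *m xhat).
have feas : norm1 xhat <= norm1 x by apply: hmin; apply: le_trans hu heps.
set h := x - xhat.
have PAh : P *m (A *m h) = v - u.
  by rewrite /u /v /h !mulmxBr opprB [RHS]addrC addrA subrK.
set delta := eps + eta.
set h1 := \sum_i `|h i 0|.
have coord : forall i, (1 + ma) * `|h i 0| <= delta + (ma + r) * h1.
  move=> i.
  pose Gp j := dot (P *m col i A) (P *m col j A).
  have hai : sq (col i A) = 1 by rewrite -norm2_sq hA expr1n.
  have qb : forall j, sq (Q *m col j A) <= r.
    move=> j; apply: Q_bound => // k.
    by rewrite dotC norm_conjC mu_mutual_ge.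
  have nPa : norm2 (P *m col i A) <= 1 by rewrite -(hA i) norm2P_le.
  have g1 : dot (P *m col i A) (P *m (A *m h)) = \sum_j Gp j * h j 0.
    rewrite mulmxA dot_mulr; apply: eq_bigr => j _; by rewrite col_mulmx.
  have g2 : `|dot (P *m col i A) (P *m (A *m h))| <= delta.
    rewrite PAh dotBr; apply: le_trans (ler_normB _ _) _.
    rewrite /delta addrC; apply: lerD.
      by apply: le_trans (CS2 _ _) _; rewrite -(mul1r eps); apply: ler_pM; rewrite ?norm2_ge0.
    by apply: le_trans (CS2 _ _) _; rewrite -(mul1r eta); apply: ler_pM; rewrite ?norm2_ge0.
  have Gii : Gp i = 1 - sq (Q *m col i A) by rewrite /Gp dotP // dotuu dotuu hai.
  have Gii0 : 0 <= Gp i by rewrite /Gp dotuu sq_ge0.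
  have Gij : forall j, j != i -> `|Gp j| <= ma + r.
    move=> j ji; rewrite /Gp dotP //; apply: le_trans (ler_normB _ _) _.
    apply: lerD; first exact: mu_self_ge.
    apply: le_trans (CS2 _ _) _.
    have nq : forall k, norm2 (Q *m col k A) <= sqrtC r.
      by move=> k; rewrite norm2E sqrtC_le ?sq_ge0.
    apply: le_trans (_ : sqrtC r * sqrtC r <= r).
      by apply: ler_pM; rewrite ?norm2_ge0.
    by rewrite -expr2 sqrtCK.
  have split1 : Gp i * h i 0 = dot (P *m col i A) (P *m (A *m h))
                 - \sum_(j | j != i) Gp j * h j 0.
    by rewrite g1 (bigD1 i) //= addrK.
  have st1 : Gp i * `|h i 0| <= delta + (ma + r) * (h1 - `|h i 0|).
    rewrite -(ger0_norm Gii0) -normrM split1; apply: le_trans (ler_normB _ _) _.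
    apply: lerD => //.
    apply: le_trans (ler_norm_sum _ _ _) _.
    have h1E : h1 - `|h i 0| = \sum_(j | j != i) `|h j 0|.
      by rewrite /h1 (bigD1 i) //= [`|h i 0| + _]addrC addrK.
    rewrite h1E mulr_sumr; apply: ler_sum => j ji.
    by rewrite normrM ler_wpM2r // Gij.
  have st2 : (1 - r) * `|h i 0| <= Gp i * `|h i 0|.
    by rewrite ler_wpM2r // Gii lerD2l lerN2 qb.
  have H := le_trans st2 st1.
  have -> : (1 + ma) * `|h i 0| = (1 - r) * `|h i 0| + (ma + r) * `|h i 0| by ring.
  have -> : delta + (ma + r) * h1 = delta + (ma + r) * (h1 - `|h i 0|) + (ma + r) * `|h i 0| by ring.
  by rewrite lerD2r.
set sig := norm1 (x - restrict x X).
have sigE : sig = \sum_(i | i \notin X) `|x i 0|.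
  rewrite /sig /norm1 (bigID (fun i => i \in X)) /= big1 ?add0r; last first.
    by move=> i iX; rewrite !mxE iX subrr normr0.
  by apply: eq_bigr => i iX; rewrite !mxE (negbTE iX) subr0.
set hT := \sum_(i | i \in X) `|h i 0|.
set hTc := \sum_(i | i \notin X) `|h i 0|.
have h1E : h1 = hT + hTc by rewrite /h1 (bigID (fun i => i \in X)).
have cone : hTc <= hT + 2 * sig.
  have fe : \sum_i `|xhat i 0| <= \sum_i `|x i 0| := feas.
  rewrite (bigID (fun i => i \in X)) [X in _ <= X](bigID (fun i => i \in X)) /= in fe.
  set a := \sum_(i | i \in X) `|x i 0| in fe.
  set c := \sum_(i | i \in X) `|xhat i 0| in fe.
  set d := \sum_(i | i \notin X) `|xhat i 0| in fe.
  rewrite -sigE in fe.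
  have s1 : a <= c + hT.
    rewrite /a /c /hT -big_split; apply: ler_sum => i _ /=.
    have -> : x i 0 = xhat i 0 + h i 0 by rewrite /h !mxE; ring.
    exact: ler_normD.
  have s2 : hTc <= sig + d.
    rewrite sigE /hTc /d -big_split; apply: ler_sum => i _ /=; rewrite /h !mxE.
    exact: ler_normB.
  apply: le_trans s2 _.
  have d1 : d <= a + sig - c by rewrite lerBrDr addrC.
  have d2 : a + sig - c <= hT + sig.
    have -> : a + sig - c = (a - c) + sig by ring.
    by rewrite lerD2r lerBlDr addrC.
  have -> : hT + 2 * sig = sig + (hT + sig) by ring.
  by rewrite lerD2l; apply: le_trans d1 d2.
have per : (1 + ma) * hT <= nx%:R * (delta + (ma + r) * h1).
  rewrite /hT mulr_sumr.
  apply: le_trans (ler_sum _ (fun i _ => coord i)) _.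
  by rewrite sumr_const cX mulr_natl.
have hT0 : 0 <= hT by apply: sumr_ge0.
have sig0 : 0 <= sig by apply: sumr_ge0.
have nh : norm2 h <= h1.
  rewrite norm2E; apply: le_trans (sqrtC_le (sq_ge0 h) (sum_norm_sq h)) _.
  by rewrite sqrCK ?sumr_ge0.
have h1b : h1 <= 2 * hT + 2 * sig.
  rewrite h1E; have -> : 2 * hT + 2 * sig = hT + (hT + 2 * sig) by ring.
  by rewrite lerD2l.
have DhT : D * hT <= nx%:R * delta + 2 * K * sig.
  have H : (1 + ma) * hT <= nx%:R * delta + K * (2 * hT + 2 * sig).
    apply: le_trans per _.
    have -> : nx%:R * (delta + (ma + r) * h1) = nx%:R * delta + K * h1 by rewrite /K /Kc -/r; ring.
    by rewrite lerD2l; apply: ler_wpM2l.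
  have -> : D * hT = (1 + ma) * hT - 2 * K * hT by rewrite /D /Dc -/K; ring.
  rewrite lerBlDr; apply: le_trans H _.
  have -> : nx%:R * delta + 2 * K * sig + 2 * K * hT = nx%:R * delta + K * (2 * hT + 2 * sig) by ring.
  by [].
apply: le_trans nh _; apply: le_trans h1b _.
have Dn0 : D != 0 by rewrite gt_eqF.
have -> : 2 * nx%:R / D * delta + (4 * K / D + 2) * sig =
   2 * ((nx%:R * delta + 2 * K * sig) / D) + 2 * sig by field.
rewrite lerD2r; apply: ler_wpM2l => //.
by rewrite ler_pdivlMr // mulrC.
Qed.
End Main.

Unset Implicit Arguments.

Theorem theorem3 (C : numClosedFieldType) :
  exists C5 C6 : C -> C -> C -> nat -> nat -> C,
    (forall mua mub mum nx ne, 0 <= C5 mua mub mum nx ne /\ 0 <= C6 mua mub mum nx ne) /\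
    forall (M Na Nb : nat) (A : 'M[C]_(M, Na)) (B : 'M[C]_(M, Nb))
           (x : 'cV[C]_Na) (e : 'cV[C]_Nb) (n z : 'cV[C]_M)
           (E : {set 'I_Nb}) (nx : nat) (X : {set 'I_Na}) (eps eta : C) (xhat : 'cV[C]_Na),
      (forall k, norm2 (col k A) = 1) ->
      (forall l, norm2 (col l B) = 1) ->
      z = A *m x + B *m e + n ->
      (forall i, (e i 0 != 0) = (i \in E)) ->
      norm2 n <= eps ->
      (1 <= nx)%N ->
      is_supp_n nx x X ->
      (2 * nx * #|E|)%:R * mu_mutual A B ^+ 2 <
        pospart (1 - mu_self A * ((2 * nx)%:R - 1))
        * pospart (1 - mu_self B * (#|E|%:R - 1)) ->
      eps <= eta ->
      (* xhat solves: minimize ||x~||_1 s.t. ||R_E (z - A x~)||_2 <= eta *)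
      norm2 (projE B E *m (z - A *m xhat)) <= eta ->
      (forall xt : 'cV[C]_Na, norm2 (projE B E *m (z - A *m xt)) <= eta ->
         norm1 xhat <= norm1 xt) ->
      norm2 (x - xhat) <=
        C5 (mu_self A) (mu_self B) (mu_mutual A B) nx #|E| * (eps + eta)
        + C6 (mu_self A) (mu_self B) (mu_mutual A B) nx #|E| * norm1 (x - restrict x X).
Proof.
exists (@C5f C), (@C6f C); split.
  by move=> *; apply: C56_ge0.
move=> M Na Nb A B x e n z E nx X eps eta xhat; exact: main.
Qed.
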